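(* Every LTL-satisfiable $\mathrm{THT}^{1}(\mathsf X,\mathsf R)$ formula has a minimal LTL model. Likewise, every LTL-satisfiable $\mathrm{THT}_1$ formula has a minimal LTL model.
   Context: Fix a finite set $P$ of atomic propositions. Formulas over $P$: $\varphi ::= p \mid \bot \mid \varphi\vee\varphi \mid \varphi\wedge\varphi \mid \varphi\rightarrow\varphi \mid \mathsf{X}\varphi \mid \varphi\,\mathsf{U}\,\varphi \mid \varphi\,\mathsf{R}\,\varphi$, with $\neg\varphi:=\varphi\rightarrow\bot$, and the modalities $\mathsf F\varphi$ and $\mathsf G\varphi$ with the meaning of $\top\mathsf U\varphi$ and $\bot\mathsf R\varphi$. An LTL interpretation is an infinite word $T$ over $2^P$. $T\models_{LTL}\varphi$ denotes standard LTL satisfaction at position $0$ (classical implication). A formula is LTL-satisfiable if it has an LTL model. For LTL interpretations, $H\sqsubset T$ means $H(i)\subseteq T(i)$ for all $i$ and $H\ne T$. A minimal LTL model of $\varphi$ is an LTL model $T$ of $\varphi$ such that no $H\sqsubset T$ satisfies $H\models_{LTL}\varphi$. $\mathrm{THT}^{1}(\mathsf X,\mathsf R)$ is the set of formulas whose only temporal modalities are $\mathsf X$ and $\mathsf R$ and whose implication height (maximal nesting of $\rightarrow$, with negation counting as an implication) is at most $1$. $\mathrm{THT}_1$ is the set of formulas (all modalities $\mathsf X,\mathsf U,\mathsf R,\mathsf F,\mathsf G$ allowed) with no nesting of temporal modalities. *)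

(* Defs.v *)
From mathcomp Require Import all_boot.
Set Implicit Arguments. Unset Strict Implicit. Unset Printing Implicit Defensive.

Section LTL.
Variable P : finType.

Inductive form : Type :=
| Atom : P -> form
| Bot : form
| Or : form -> form -> form
| And : form -> form -> form
| Imp : form -> form -> form
| Next : form -> form
| Until : form -> form -> form
| Release : form -> form -> form.

Definition Neg (f : form) : form := Imp f Bot.
Definition Top : form := Imp Bot Bot.
Definition Eventually (f : form) : form := Until Top f.
Definition Always (f : form) : form := Release Bot f.

Definition interp := nat -> {set P}.

(* Standard LTL satisfaction at position i (classical implication). *)
Fixpoint sat (T : interp) (i : nat) (f : form) : Prop :=
  match f with
  | Atom p => p \in T i
  | Bot => False
  | Or a b => sat T i a \/ sat T i b
  | And a b => sat T i a /\ sat T i b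
  | Imp a b => sat T i a -> sat T i b
  | Next a => sat T i.+1 a
  | Until a b => exists k, i <= k /\ sat T k b /\
                   (forall j, i <= j -> j < k -> sat T j a)
  | Release a b => forall k, i <= k ->
                   sat T k b \/ (exists j, i <= j /\ j < k /\ sat T j a)
  end.

Definition models (T : interp) (f : form) : Prop := sat T 0 f.

Definition LTL_satisfiable (f : form) : Prop := exists T, models T f.

Definition strictly_below (H T : interp) : Prop :=
  (forall i, H i \subset T i) /\ ~ (forall i, H i = T i).

Definition minimal_model (f : form) (T : interp) : Prop :=
  models T f /\ forall H, strictly_below H T -> ~ models H f.

(* Implication height; negation counts as an implication since Neg f = Imp f Bot. *)
Fixpoint imp_height (f : form) : nat :=
  match f with
  | Atom _ | Bot => 0
  | Or a b | And a b | Until a b | Release a b => maxn (imp_height a) (imp_height b)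
  | Imp a b => (maxn (imp_height a) (imp_height b)).+1
  | Next a => imp_height a
  end.

Fixpoint only_X_R (f : form) : bool :=
  match f with
  | Atom _ | Bot => true
  | Or a b | And a b | Imp a b | Release a b => only_X_R a && only_X_R b
  | Next a => only_X_R a
  | Until _ _ => false
  end.

Fixpoint temp_depth (f : form) : nat :=
  match f with
  | Atom _ | Bot => 0
  | Or a b | And a b | Imp a b => maxn (temp_depth a) (temp_depth b)
  | Next a => (temp_depth a).+1
  | Until a b | Release a b => (maxn (temp_depth a) (temp_depth b)).+1
  end.

Definition in_THT1_XR (f : form) : Prop := only_X_R f /\ imp_height f <= 1.
Definition in_THT_1 (f : form) : Prop := temp_depth f <= 1.

End LTL.

(* Main.v *)
Require Import Defs.
From mathcomp Require Import all_boot.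
From mathcomp Require Import zify.
From Stdlib Require Import Classical ClassicalEpsilon.
Set Implicit Arguments. Unset Strict Implicit. Unset Printing Implicit Defensive.

Section Proofs.
Variable P : finType.
Implicit Types (H T : interp P).

Lemma ex_minP (Q : nat -> Prop) :
  (exists n, Q n) -> exists n, Q n /\ forall m, Q m -> n <= m.
Proof.
move=> [n Qn].
have main : forall N k, k <= N -> Q k -> exists n, Q n /\ forall m, Q m -> n <= m.
  elim=> [|N IH] k hk Qk.
    exists k; split=> // m _. by move: hk; rewrite leqn0 => /eqP->.
  case: (classic (exists m, Q m /\ m < k)) => [[m [Qm hm]]|hno].
    apply: (IH m) => //. lia.
  exists k; split=> // m Qm. rewrite leqNgt; apply/negP => hmk; apply: hno; by exists m.
exact: (main n n (leqnn n) Qn).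
Qed.

Lemma sat_letter (phi : form P) : temp_depth phi = 0 ->
  forall H T i j, H i = T j -> (sat H i phi <-> sat T j phi).
Proof.
elim: phi => [p||a IHa b IHb|a IHa b IHb|a IHa b IHb|a IHa|a IHa b IHb|a IHa b IHb]
  /= hd H T i j e.
- by rewrite e.
- done.
- have ha : temp_depth a = 0 by lia. have hb : temp_depth b = 0 by lia.
  have := IHa ha H T i j e; have := IHb hb H T i j e; tauto.
- have ha : temp_depth a = 0 by lia. have hb : temp_depth b = 0 by lia.
  have := IHa ha H T i j e; have := IHb hb H T i j e; tauto.
- have ha : temp_depth a = 0 by lia. have hb : temp_depth b = 0 by lia.
  have := IHa ha H T i j e; have := IHb hb H T i j e; tauto.
- discriminate.
- discriminate.
- discriminate.
Qed.

Definition agree H T K := forall j, j <= K -> H j = T j.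
Definition Ctail H K := forall j, K < j -> exists i, i <= K /\ H j = H i.

Lemma until_tr a b H T K : temp_depth a = 0 -> temp_depth b = 0 ->
  agree H T K -> Ctail H K -> sat H 0 (Until a b) -> sat T 0 (Until a b).
Proof.
move=> ha hb ag ct /= [k [_ [hbk hak]]].
case: (leqP k K) => hkK.
- exists k; split=> //; split.
  + exact: (proj1 (sat_letter hb (ag k hkK)) hbk).
  + move=> j _ hj. have hjK : j <= K by lia.
    exact: (proj1 (sat_letter ha (ag j hjK)) (hak j (leq0n j) hj)).
- have [i [hi e]] := ct k hkK.
  exists i; split=> //; split.
  + apply: (proj1 (sat_letter hb (ag i hi))). exact: (proj1 (sat_letter hb e) hbk).
  + move=> j _ hj. have hjK : j <= K by lia. have hjk : j < k by lia.
    exact: (proj1 (sat_letter ha (ag j hjK)) (hak j (leq0n j) hjk)).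
Qed.

Lemma release_tr a b H T K : temp_depth a = 0 -> temp_depth b = 0 ->
  agree H T K -> Ctail T K -> sat H 0 (Release a b) -> sat T 0 (Release a b).
Proof.
move=> ha hb ag ct /= hR k _.
case: (leqP k K) => hkK.
- case: (hR k (leq0n k)) => [hbk|[j [_ [hj haj]]]].
  + left. exact: (proj1 (sat_letter hb (ag k hkK)) hbk).
  + right. exists j; split=> //; split=> //. have hjK : j <= K by lia.
    exact: (proj1 (sat_letter ha (ag j hjK)) haj).
- have [i [hi e]] := ct k hkK.
  case: (hR i (leq0n i)) => [hbi|[j [_ [hj haj]]]].
  + left. apply: (proj2 (sat_letter hb e)). exact: (proj1 (sat_letter hb (ag i hi)) hbi).
  + right. exists j; split=> //; split; first by lia. have hjK : j <= K by lia.
    exact: (proj1 (sat_letter ha (ag j hjK)) haj).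
Qed.

Lemma agree_sym H T K : agree H T K -> agree T H K.
Proof. by move=> ag j hj; rewrite ag. Qed.

Lemma eq_models (f : form P) : temp_depth f <= 1 -> forall H T K, 1 <= K ->
  agree H T K -> Ctail H K -> Ctail T K -> (sat H 0 f <-> sat T 0 f).
Proof.
elim: f => [p||a IHa b IHb|a IHa b IHb|a IHa b IHb|a IHa|a IHa b IHb|a IHa b IHb]
  /= hd H T K hK ag cH cT.
- by rewrite (ag 0 (leq0n K)).
- done.
- have ha : temp_depth a <= 1 by lia. have hb : temp_depth b <= 1 by lia.
  have := IHa ha H T K hK ag cH cT; have := IHb hb H T K hK ag cH cT; tauto.
- have ha : temp_depth a <= 1 by lia. have hb : temp_depth b <= 1 by lia.
  have := IHa ha H T K hK ag cH cT; have := IHb hb H T K hK ag cH cT; tauto.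
- have ha : temp_depth a <= 1 by lia. have hb : temp_depth b <= 1 by lia.
  have := IHa ha H T K hK ag cH cT; have := IHb hb H T K hK ag cH cT; tauto.
- have ha : temp_depth a = 0 by lia. exact: (sat_letter ha (ag 1 hK)).
- have ha : temp_depth a = 0 by lia. have hb : temp_depth b = 0 by lia.
  split; [exact: (until_tr ha hb ag cH) | exact: (until_tr ha hb (agree_sym ag) cT)].
- have ha : temp_depth a = 0 by lia. have hb : temp_depth b = 0 by lia.
  split; [exact: (release_tr ha hb ag cT) | exact: (release_tr ha hb (agree_sym ag) cH)].
Qed.

Lemma norm H n : exists K, n <= K /\ Ctail H K.
Proof.
have gen : forall s : seq {set P}, exists K, forall X, X \in s ->
    (exists i, H i = X) -> exists i, i <= K /\ H i = X.
  elim=> [|X s [K0 IH]]; first by exists 0.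
  case: (classic (exists i, H i = X)) => [[i0 hi0]|hno].
  - exists (maxn K0 i0) => Y; rewrite inE => /orP [/eqP->|hY].
    + move=> _; exists i0; split=> //; lia.
    + move=> hex. have [i [hi e]] := IH Y hY hex. exists i; split=> //; lia.
  - exists K0 => Y; rewrite inE => /orP [/eqP->|hY] hex.
    + by case: hno.
    + exact: IH.
have [K hK] := gen (enum {set P}).
exists (maxn K n); split; first lia.
move=> j hj. have [i [hi e]] := hK (H j) (mem_enum _ _) (ex_intro _ j erefl).
exists i; split; [lia | by rewrite e].
Qed.

Definition cut H K (c : {set P}) : interp P := fun j => if j <= K then H j else c.

Lemma sum_lt (F G : nat -> nat) n i : (forall j, F j <= G j) -> F i < G i -> i < n ->
  \sum_(j < n) F j < \sum_(j < n) G j.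
Proof.
move=> hle hlt hi.
rewrite (bigD1 (Ordinal hi)) //= [X in _ < X](bigD1 (Ordinal hi)) //=.
rewrite -addSn; apply: leq_add => //. apply: leq_sum => j _; exact: hle.
Qed.

Lemma card_lt (A B : {set P}) : A \subset B -> A != B -> #|A| < #|B|.
Proof. move=> hs hn; apply: proper_card; by rewrite properEneq hn hs. Qed.

Lemma part2 (f : form P) : temp_depth f <= 1 -> LTL_satisfiable f ->
  exists T, minimal_model f T.
Proof.
move=> hd [T0 hT0].
pose Good H (c : {set P}) K := models H f /\ forall j, K < j -> H j = c.
have hex : exists k, exists H c K, Good H c K /\ #|c| = k.
  have [K [hK ct]] := norm T0 1.
  exists #|T0 K|, (cut T0 K (T0 K)), (T0 K), K; split=> //; split.
  - rewrite /models. apply: (proj1 (eq_models hd hK _ ct _) hT0).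
    + by move=> j hj; rewrite /cut hj.
    + move=> j hj; exists K; split=> //. by rewrite /cut leqnn leqNgt hj.
  - by move=> j hj; rewrite /cut leqNgt hj.
have [m [[H1 [c1 [K1 [g1 e1]]]] hmin1]] := ex_minP hex.
have hex2 : exists s, exists H c K, Good H c K /\ #|c| = m /\ \sum_(j < K.+1) #|H j| = s.
  by exists (\sum_(j < K1.+1) #|H1 j|), H1, c1, K1.
have [s0 [[H [c [K [[hm ht] [hc hs]]]]] hmin2]] := ex_minP hex2.
exists H; split=> // H' [hb hne] hm'.
case: (classic (exists j, K < j /\ H' j != c)) => [[j [hj hne']]|hno].
- have hlt : #|H' j| < #|c| by apply: card_lt => //; rewrite -(ht j hj); exact: hb.
  have [K' [hK' ct]] := norm H' (maxn j 1).
  have hK1 : 1 <= K' by lia.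
  have hjK : j <= K' by lia.
  have g : Good (cut H' K' (H' j)) (H' j) K'.
    split.
    + rewrite /models. apply: (proj1 (eq_models hd hK1 _ ct _) hm').
      * by move=> j' hj'; rewrite /cut hj'.
      * move=> j' hj'; exists j; split=> //. by rewrite /cut hjK leqNgt hj'.
    + by move=> j' hj'; rewrite /cut leqNgt hj'.
  have := hmin1 #|H' j| (ex_intro _ _ (ex_intro _ _ (ex_intro _ _ (conj g erefl)))).
  lia.
- have ht' : forall j, K < j -> H' j = c.
    move=> j hj; apply/eqP; apply/negPn/negP => hn; apply: hno; by exists j.
  have := hmin2 (\sum_(j < K.+1) #|H' j|)
    (ex_intro _ H' (ex_intro _ c (ex_intro _ K (conj (conj hm' ht') (conj hc erefl))))).
  have [i hi] := not_all_ex_not _ _ hne.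
  case: (leqP i K) => hiK; last by case: hi; rewrite ht // ht'.
  rewrite -hs => hle.
  have : \sum_(j < K.+1) #|H' j| < \sum_(j < K.+1) #|H j|.
    apply: (@sum_lt (fun j => #|H' j|) (fun j => #|H j|) K.+1 i).
    + move=> j; apply: subset_leq_card; exact: hb.
    + apply: card_lt; [exact: hb | by apply/eqP].
    + lia.
  lia.
Qed.

Definition below H T := forall j, H j \subset T j.

Definition CL (Q : interp P -> Prop) := forall H,
  (forall N, exists T, below H T /\ (forall j, j <= N -> T j = H j) /\ Q T) -> Q H.

Lemma CL_or Q1 Q2 : CL Q1 -> CL Q2 -> CL (fun T => Q1 T \/ Q2 T).
Proof.
move=> c1 c2 H hyp.
case: (classic (forall N, exists T, below H T /\ (forall j, j <= N -> T j = H j) /\ Q1 T))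
  => [h|h]; first by left; apply: c1.
right; apply: c2 => N.
have [N0 hN0] := not_all_ex_not _ _ h.
have [T [bl [ag [q1|q2]]]] := hyp (maxn N N0).
- case: hN0; exists T; split=> //; split=> // j hj; apply: ag; lia.
- exists T; split=> //; split=> // j hj; apply: ag; lia.
Qed.

Lemma CL_and Q1 Q2 : CL Q1 -> CL Q2 -> CL (fun T => Q1 T /\ Q2 T).
Proof.
move=> c1 c2 H hyp; split.
- apply: c1 => N; have [T [bl [ag [q1 _]]]] := hyp N; by exists T.
- apply: c2 => N; have [T [bl [ag [_ q2]]]] := hyp N; by exists T.
Qed.

Lemma CL_forall (R : nat -> interp P -> Prop) : (forall k, CL (R k)) ->
  CL (fun T => forall k, R k T).
Proof.
move=> c H hyp k; apply: c => N; have [T [bl [ag r]]] := hyp N; by exists T.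
Qed.

Lemma CL_impc (c : Prop) R : CL R -> CL (fun T => c -> R T).
Proof.
move=> cl H hyp hc; apply: cl => N; have [T [bl [ag r]]] := hyp N.
exists T; split=> //; split=> //; exact: r.
Qed.

Lemma CL_ext R1 R2 : (forall T, R1 T <-> R2 T) -> CL R1 -> CL R2.
Proof.
move=> e cl H hyp; apply/e; apply: cl => N; have [T [bl [ag r]]] := hyp N.
exists T; split=> //; split=> //; exact/e.
Qed.

Lemma CL_andc (c : Prop) R : CL R -> CL (fun T => c /\ R T).
Proof.
move=> cl H hyp; split.
- by have [T [_ [_ [hc _]]]] := hyp 0.
- apply: cl => N; have [T [bl [ag [_ r]]]] := hyp N; by exists T.
Qed.

Lemma CL_exfin (Q : nat -> interp P -> Prop) : (forall j, CL (Q j)) ->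
  forall i k, CL (fun T => exists j, i <= j /\ j < k /\ Q j T).
Proof.
move=> cq i; elim=> [|k IH].
- move=> H hyp; have [T [_ [_ [j [_ [hj _]]]]]] := hyp 0; by [].
- apply: (@CL_ext (fun T => (exists j, i <= j /\ j < k /\ Q j T) \/ (i <= k /\ Q k T))).
  + move=> T; split.
    * case=> [[j [h1 [h2 h3]]]|[h1 h2]]; [exists j; split=> //; split=> //; lia|].
      exists k; split=> //; split=> //.
    * move=> [j [h1 [h2 h3]]].
      case: (ltnP j k) => hjk; [left; exists j; split=> //|right].
      have -> : k = j by lia. split=> //.
  + apply: CL_or => //. exact: CL_andc.
Qed.

Lemma mono (phi : form P) : imp_height phi = 0 ->
  forall H T i, below H T -> sat H i phi -> sat T i phi.
Proof.
elim: phi => [p||a IHa b IHb|a IHa b IHb|a IHa b IHb|a IHa|a IHa b IHb|a IHa b IHb]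
  /= hh H T i hb.
- move=> hp; exact: (subsetP (hb i)).
- done.
- have ha : imp_height a = 0 by lia. have hb' : imp_height b = 0 by lia.
  case=> h; [left; exact: (IHa ha H T i hb h) | right; exact: (IHb hb' H T i hb h)].
- have ha : imp_height a = 0 by lia. have hb' : imp_height b = 0 by lia.
  case=> h1 h2; split; [exact: (IHa ha H T i hb h1) | exact: (IHb hb' H T i hb h2)].
- discriminate.
- exact: IHa.
- have ha : imp_height a = 0 by lia. have hb' : imp_height b = 0 by lia.
  move=> [k [hk [hbk hak]]]; exists k; split=> //; split.
  + exact: (IHb hb' H T k hb hbk).
  + move=> j h1 h2; exact: (IHa ha H T j hb (hak j h1 h2)).
- have ha : imp_height a = 0 by lia. have hb' : imp_height b = 0 by lia.
  move=> hR k hk; case: (hR k hk) => [h|[j [h1 [h2 h3]]]].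
  + left; exact: (IHb hb' H T k hb h).
  + right; exists j; split=> //; split=> //; exact: (IHa ha H T j hb h3).
Qed.

Lemma cl_sat (phi : form P) : only_X_R phi -> imp_height phi <= 1 ->
  forall i, CL (fun T => sat T i phi).
Proof.
elim: phi => [p||a IHa b IHb|a IHa b IHb|a IHa b IHb|a IHa|a IHa b IHb|a IHa b IHb]
  /= ho hh i.
- move=> H hyp. have [T [_ [ag hp]]] := hyp i. by rewrite /= -(ag i (leqnn i)).
- move=> H hyp. by have [T [_ [_ hT]]] := hyp 0.
- move/andP: ho => [hoa hob].
  have ha : imp_height a <= 1 by lia. have hb : imp_height b <= 1 by lia.
  exact: (CL_or (IHa hoa ha i) (IHb hob hb i)).
- move/andP: ho => [hoa hob].
  have ha : imp_height a <= 1 by lia. have hb : imp_height b <= 1 by lia.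
  exact: (CL_and (IHa hoa ha i) (IHb hob hb i)).
- move/andP: ho => [hoa hob].
  have ha : imp_height a = 0 by lia. have hb : imp_height b <= 1 by lia.
  move=> H hyp hHa. apply: (IHb hob hb i) => N.
  have [T [bl [ag hT]]] := hyp N.
  exists T; split=> //; split=> //. apply: hT. exact: (mono ha bl hHa).
- exact: (IHa ho hh i.+1).
- done.
- move/andP: ho => [hoa hob].
  have ha : imp_height a <= 1 by lia. have hb : imp_height b <= 1 by lia.
  apply: (@CL_forall (fun k T => i <= k -> sat T k b \/
            (exists j, i <= j /\ j < k /\ sat T j a))) => k.
  apply: CL_impc. apply: CL_or; first exact: (IHb hob hb k).
  exact: (@CL_exfin (fun j T => sat T j a) (fun j => IHa hoa ha j) i k).
Qed.

Definition Cand (f : form P) T n T' :=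
  models T' f /\ below T' T /\ forall j, j < n -> T' j = T j.
Definition Best (f : form P) T n T' :=
  Cand f T n T' /\ forall T'', Cand f T n T'' -> #|T' n| <= #|T'' n|.

Lemma best_ex f T n : models T f -> exists T', Best f T n T'.
Proof.
move=> hT.
have hex : exists k, exists T', Cand f T n T' /\ #|T' n| = k.
  exists #|T n|, T; split=> //; split=> //; split=> // j; exact: subxx.
have [k [[T' [hc hk]] hmin]] := ex_minP hex.
exists T'; split=> // T'' hc''. rewrite hk. apply: hmin. by exists T''.
Qed.

Definition inh : inhabited (interp P) := inhabits (fun _ => set0).
Definition step f T n := epsilon inh (Best f T n).
Fixpoint seqT f T0 n := match n with
  | 0 => step f T0 0
  | n'.+1 => step f (seqT f T0 n') n'.+1 end.
Definition prev f T0 n := match n with 0 => T0 | n'.+1 => seqT f T0 n' end.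

Lemma seqT_best f T0 : models T0 f -> forall n, Best f (prev f T0 n) n (seqT f T0 n).
Proof.
move=> h0; elim=> [|n IH].
- apply: epsilon_spec; exact: best_ex.
- apply: epsilon_spec; apply: best_ex. exact: IH.1.1.
Qed.

Lemma part1 (f : form P) : only_X_R f -> imp_height f <= 1 -> LTL_satisfiable f ->
  exists T, minimal_model f T.
Proof.
move=> ho hh [T0 hT0].
have B := seqT_best hT0.
pose S := seqT f T0.
have chain : forall n d, below (S (n + d)) (S n) /\ forall j, j <= n -> S (n + d) j = S n j.
  move=> n; elim=> [|d [IH1 IH2]].
  - rewrite addn0; split=> // j; exact: subxx.
  - have [[_ [bl ag]] _] := B (n + d).+1.
    rewrite addnS; split.
    + move=> j; apply: subset_trans (IH1 j); exact: bl.
    + move=> j hj; rewrite -(IH2 j hj); apply: ag; lia.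
pose H := fun j => S j j.
have agH : forall N j, j <= N -> S N j = H j.
  move=> N j hj; have := (chain j (N - j)).2 j (leqnn j). by rewrite subnKC.
have blH : forall N, below H (S N).
  move=> N j; case: (leqP j N) => hj.
  - rewrite (agH N j hj); exact: subxx.
  - have := (chain N (j - N)).1 j. rewrite subnKC; last by lia. done.
have bl0 : below H T0.
  move=> j. apply: subset_trans (blH 0 j) _. have [[_ [bl _]] _] := B 0. exact: bl.
have mH : models H f.
  rewrite /models; apply: (cl_sat ho hh) => N. exists (S N); split; first exact: blH.
  split; first exact: agH. exact: (B N).1.1.
exists H; split=> // H' [hb hne] hm'.
have exi : exists i, H' i != H i.
  have [i hi] := not_all_ex_not _ _ hne. exists i; exact/eqP.
case: (ex_minnP exi) => i hi hmin.
have hc : Cand f (prev f T0 i) i H'.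
  split=> //; split.
  - case: i hi hmin => [|n] _ _ j.
    + exact: subset_trans (hb j) (bl0 j).
    + exact: subset_trans (hb j) (blH n j).
  - move=> j hj. have hj' : H' j = H j.
      apply/eqP; apply/negPn/negP => hn. have := hmin j hn. lia.
    rewrite hj'. case: i hi hmin hj => [|n] _ _ hj; first by [].
    by rewrite /= -/S (agH n j) //; lia.
have := (B i).2 H' hc.
have : #|H' i| < #|H i| by apply: card_lt; [exact: hb | exact: hi].
rewrite /H /S => h1 h2. lia.
Qed.

End Proofs.

Theorem mainTheorem10 (P : finType) :
  (forall f : form P, in_THT1_XR f -> LTL_satisfiable f ->
     exists T, minimal_model f T) /\
  (forall f : form P, in_THT_1 f -> LTL_satisfiable f ->
     exists T, minimal_model f T).
Proof.
split.
- move=> f [ho hh]; exact: part1.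
- move=> f hd; exact: part2.
Qed.
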